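(* Let $L$ be a split regular Hom-Lie color algebra with symmetric root system $\Lambda$. For every $\alpha\in\Lambda$, the graded subspace $L_{\Lambda_\alpha}=H_{\Lambda_\alpha}\oplus V_{\Lambda_\alpha}$ is a subalgebra of $L$, i.e. $[L_{\Lambda_\alpha},L_{\Lambda_\alpha}]\subset L_{\Lambda_\alpha}$ and $\phi(L_{\Lambda_\alpha})=L_{\Lambda_\alpha}$.
   Context: Let $\mathbb{K}$ be a field and $\Gamma$ an abelian group. A bi-character is $\varepsilon:\Gamma\times\Gamma\to\mathbb{K}\setminus\{0\}$ with $\varepsilon(a,b)\varepsilon(b,a)=1$, $\varepsilon(a,b+c)=\varepsilon(a,b)\varepsilon(a,c)$, $\varepsilon(a+b,c)=\varepsilon(a,c)\varepsilon(b,c)$. A Hom-Lie color algebra $(L,[\cdot,\cdot],\phi,\varepsilon)$ is a $\Gamma$-graded space $L=\bigoplus_gL_g$ with bilinear $[\cdot,\cdot]$, $[L_g,L_h]\subset L_{g+h}$, linear $\phi$ with $\phi(L_g)\subset L_g$, $\phi([x,y])=[\phi x,\phi y]$, such that for homogeneous $x,y,z$ of degrees $\bar x,\bar y,\bar z$: $[x,y]=-\varepsilon(\bar x,\bar y)[y,x]$ and $\varepsilon(\bar z,\bar x)[\phi(x),[y,z]]+\varepsilon(\bar x,\bar y)[\phi(y),[z,x]]+\varepsilon(\bar y,\bar z)[\phi(z),[x,y]]=0$; regular means $\phi$ bijective. A subalgebra is a graded subspace $A$ with $[A,A]\subset A$, $\phi(A)=A$; abelian if $[A,A]=0$. $H=\bigoplus_gH_g$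 is a maximal abelian graded subalgebra (so $\phi(H_0)=H_0$). For linear $\alpha:H_0\to\mathbb{K}$, $L_\alpha=\{v:[h,v]=\alpha(h)\phi(v)\ \forall h\in H_0\}$; $\Lambda=\{\alpha\in H_0^*\setminus\{0\}:L_\alpha\neq0\}$; $L$ is split if $L=H\oplus(\bigoplus_{\alpha\in\Lambda}L_\alpha)$. $\Lambda$ is symmetric if $\alpha\in\Lambda\Rightarrow-\alpha\in\Lambda$. For $z\in\mathbb{Z}$, $\alpha\phi^{z}:=\alpha\circ(\phi|_{H_0})^{z}$; $\mathbb{N}=\{0,1,2,\dots\}$. Connection: for $\alpha,\beta\in\Lambda$, $\alpha$ is connected to $\beta$ if there exist $k\ge1$ and $\alpha_1,\dots,\alpha_k\in\Lambda$ such that: if $k=1$, $\alpha_1\in\{\alpha\phi^{-n}:n\in\mathbb{N}\}\cap\{\pm\beta\phi^{-m}:m\in\mathbb{N}\}$; if $k\ge2$, then $\alpha_1\in\{\alpha\phi^{-n}:n\in\mathbb{N}\}$, for each $i=1,\dots,k-2$ one has $\alpha_1\phi^{-i}+\alpha_2\phi^{-i}+\alpha_3\phi^{-i+1}+\cdots+\alpha_{i+1}\phi^{-1}\in\Lambda$, and $\alpha_1\phi^{-k+1}+\alpha_2\phi^{-k+1}+\alpha_3\phi^{-k+2}+\cdots+\alpha_k\phi^{-1}\in\{\pm\beta\phi^{-m}:m\in\mathbb{N}\}$. Connectedness $\sim$ is an equivalence relation on $\Lambda$; $\Lambda_\alpha:=\{\beta\in\Lambda:\beta\sim\alpha\}$.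 Define $H_{\Lambda_\alpha}:=\mathrm{span}_{\mathbb{K}}\{[L_\beta,L_{-\beta}]:\beta\in\Lambda_\alpha\}\subset H$, $V_{\Lambda_\alpha}:=\bigoplus_{\beta\in\Lambda_\alpha}L_\beta$, and $L_{\Lambda_\alpha}:=H_{\Lambda_\alpha}\oplus V_{\Lambda_\alpha}$. *)

(* Defs.v *)
From HB Require Import structures.
From mathcomp Require Import all_boot all_order all_algebra.
From Stdlib Require Import ClassicalEpsilon.
Set Implicit Arguments. Unset Strict Implicit. Unset Printing Implicit Defensive.
Import GRing.Theory.
Local Open Scope ring_scope.

(* Subspaces of a (possibly infinite-dimensional) K-vector space V are
   represented as predicates V -> Prop. *)
Definition is_subspace (K : fieldType) (V : lmodType K) (P : V -> Prop) : Prop :=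
  P 0 /\ forall (a : K) (x y : V), P x -> P y -> P (a *: x + y).

Inductive span (K : fieldType) (V : lmodType K) (P : V -> Prop) : V -> Prop :=
| span0 : span P 0
| spanS : forall (a : K) (x y : V), P x -> span P y -> span P (a *: x + y).

Definition bicharacter (K : fieldType) (G : zmodType) (eps : G -> G -> K) : Prop :=
  (forall a b, eps a b != 0) /\
  (forall a b, eps a b * eps b a = 1) /\
  (forall a b c, eps a (b + c) = eps a b * eps a c) /\
  (forall a b c, eps (a + b) c = eps a c * eps b c).

Definition grading (K : fieldType) (G : zmodType) (V : lmodType K)
    (Lg : G -> V -> Prop) : Prop :=
  (forall g, is_subspace (Lg g)) /\
  (forall v : V, exists s : seq (G * V),
      uniq (map fst s) /\ (forall p, p \in s -> Lg p.1 p.2) /\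
      v = \sum_(p <- s) p.2) /\
  (forall s : seq (G * V),
      uniq (map fst s) -> (forall p, p \in s -> Lg p.1 p.2) ->
      \sum_(p <- s) p.2 = 0 -> forall p, p \in s -> p.2 = 0).

Definition HomLieColor (K : fieldType) (G : zmodType) (V : lmodType K)
    (br : V -> V -> V) (phi : V -> V) (eps : G -> G -> K)
    (Lg : G -> V -> Prop) : Prop :=
  bicharacter eps /\ grading Lg /\
  (forall (a : K) x y z, br (a *: x + y) z = a *: br x z + br y z) /\
  (forall (a : K) x y z, br x (a *: y + z) = a *: br x y + br x z) /\
  (forall (a : K) x y, phi (a *: x + y) = a *: phi x + phi y) /\
  (forall g h x y, Lg g x -> Lg h y -> Lg (g + h) (br x y)) /\
  (forall g x, Lg g x -> Lg g (phi x)) /\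
  (forall x y, phi (br x y) = br (phi x) (phi y)) /\
  (forall g h x y, Lg g x -> Lg h y -> br x y = - (eps g h *: br y x)) /\
  (forall a b c x y z, Lg a x -> Lg b y -> Lg c z ->
      eps c a *: br (phi x) (br y z) + eps a b *: br (phi y) (br z x)
      + eps b c *: br (phi z) (br x y) = 0).

Definition regular (V : Type) (phi : V -> V) : Prop := bijective phi.

Definition graded_subspace (K : fieldType) (G : zmodType) (V : lmodType K)
    (Lg : G -> V -> Prop) (A : V -> Prop) : Prop :=
  is_subspace A /\
  forall a, A a -> exists s : seq (G * V),
      uniq (map fst s) /\ (forall p, p \in s -> Lg p.1 p.2 /\ A p.2) /\
      a = \sum_(p <- s) p.2.

Definition subalgebra (K : fieldType) (G : zmodType) (V : lmodType K)
    (br : V -> V -> V) (phi : V -> V) (Lg : G -> V -> Prop) (A : V -> Prop) : Prop :=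
  graded_subspace Lg A /\
  (forall x y, A x -> A y -> A (br x y)) /\
  (forall x, A x -> A (phi x)) /\ (forall y, A y -> exists x, A x /\ phi x = y).

Definition abelian_subalgebra (K : fieldType) (G : zmodType) (V : lmodType K)
    (br : V -> V -> V) (phi : V -> V) (Lg : G -> V -> Prop) (A : V -> Prop) : Prop :=
  subalgebra br phi Lg A /\ (forall x y, A x -> A y -> br x y = 0).

Definition max_abelian_subalgebra (K : fieldType) (G : zmodType) (V : lmodType K)
    (br : V -> V -> V) (phi : V -> V) (Lg : G -> V -> Prop) (H : V -> Prop) : Prop :=
  abelian_subalgebra br phi Lg H /\
  forall A, abelian_subalgebra br phi Lg A -> (forall x, H x -> A x) ->
    forall x, A x -> H x.

Definition H0 (K : fieldType) (G : zmodType) (V : lmodType K)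
    (Lg : G -> V -> Prop) (H : V -> Prop) : V -> Prop :=
  fun x => H x /\ Lg 0 x.

(* Elements of H_0^* are represented by functions V -> K; only their
   restriction to H_0 matters.  Equality in H_0^*: *)
Definition feq_on (K : fieldType) (V : lmodType K) (P : V -> Prop) (a b : V -> K) : Prop :=
  forall h, P h -> a h = b h.

Definition linear_on (K : fieldType) (V : lmodType K) (P : V -> Prop) (a : V -> K) : Prop :=
  forall (c : K) x y, P x -> P y -> a (c *: x + y) = c * a x + a y.

Definition root_space (K : fieldType) (G : zmodType) (V : lmodType K)
    (br : V -> V -> V) (phi : V -> V) (Lg : G -> V -> Prop) (H : V -> Prop)
    (alpha : V -> K) : V -> Prop :=
  fun v => forall h, H0 Lg H h -> br h v = alpha h *: phi v.

Definition is_root (K : fieldType) (G : zmodType) (V : lmodType K)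
    (br : V -> V -> V) (phi : V -> V) (Lg : G -> V -> Prop) (H : V -> Prop)
    (alpha : V -> K) : Prop :=
  linear_on (H0 Lg H) alpha /\ ~ feq_on (H0 Lg H) alpha (fun _ => 0) /\
  exists v, v != 0 /\ root_space br phi Lg H alpha v.

Definition split_wrt (K : fieldType) (G : zmodType) (V : lmodType K)
    (br : V -> V -> V) (phi : V -> V) (Lg : G -> V -> Prop) (H : V -> Prop) : Prop :=
  (forall x : V, exists (h : V) (s : seq ((V -> K) * V)),
      H h /\ (forall p, List.In p s -> is_root br phi Lg H p.1 /\
                                      root_space br phi Lg H p.1 p.2) /\
      x = h + \sum_(p <- s) p.2) /\
  (forall (h : V) (s : seq ((V -> K) * V)),
      H h -> (forall p, List.In p s -> is_root br phi Lg H p.1 /\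
                                     root_space br phi Lg H p.1 p.2) ->
      (forall i j, (i < size s)%N -> (j < size s)%N -> i <> j ->
         ~ feq_on (H0 Lg H) (nth (fun _ => 0, 0) s i).1 (nth (fun _ => 0, 0) s j).1) ->
      h + \sum_(p <- s) p.2 = 0 ->
      h = 0 /\ forall p, List.In p s -> p.2 = 0).

Definition symmetric_roots (K : fieldType) (G : zmodType) (V : lmodType K)
    (br : V -> V -> V) (phi : V -> V) (Lg : G -> V -> Prop) (H : V -> Prop) : Prop :=
  forall alpha, is_root br phi Lg H alpha -> is_root br phi Lg H (fun h => - alpha h).

(* The inverse of phi (phi is bijective; phi^{-1} is chosen classically,
   and is the two-sided inverse whenever phi is bijective). *)
Definition finv (K : fieldType) (V : lmodType K) (phi : V -> V) : V -> V :=
  fun y => epsilon (inhabits (0 : V)) (fun x => phi x = y).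

Definition comp_phi_inv (K : fieldType) (V : lmodType K) (phi : V -> V)
    (alpha : V -> K) (n : nat) : V -> K :=
  fun h => alpha (iter n (finv phi) h).

(* For a sequence s = [alpha_1; ...; alpha_k] and i >= 0:
   S s i = alpha_1 phi^{-i} + alpha_2 phi^{-i} + alpha_3 phi^{-i+1} + ... + alpha_{i+1} phi^{-1}
   (so S s 0 = alpha_1). *)
Definition conn_sum (K : fieldType) (V : lmodType K) (phi : V -> V)
    (s : seq (V -> K)) (i : nat) : V -> K :=
  fun h => comp_phi_inv phi (nth (fun _ => 0) s 0) i h
         + \sum_(2 <= j < i.+2) comp_phi_inv phi (nth (fun _ => 0) s j.-1) (i.+2 - j) h.

(* With k = size s >= 1 and s = [alpha_1;...;alpha_k]:
   alpha_1 = alpha phi^{-n} for some n; S s i ∈ Λ for 1 <= i <= k-2;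
   S s (k-1) ∈ {± beta phi^{-m}}.  For k = 1 this is exactly the paper's
   condition alpha_1 ∈ {alpha phi^{-n}} ∩ {± beta phi^{-m}} since S s 0 = alpha_1. *)
Definition connected (K : fieldType) (G : zmodType) (V : lmodType K)
    (br : V -> V -> V) (phi : V -> V) (Lg : G -> V -> Prop) (H : V -> Prop)
    (alpha beta : V -> K) : Prop :=
  is_root br phi Lg H alpha /\ is_root br phi Lg H beta /\
  exists s : seq (V -> K),
    (0 < size s)%N /\
    (forall a, List.In a s -> is_root br phi Lg H a) /\
    (exists n : nat, feq_on (H0 Lg H) (nth (fun _ => 0) s 0) (comp_phi_inv phi alpha n)) /\
    (forall i : nat, (1 <= i)%N -> (i <= size s - 2)%N ->
        is_root br phi Lg H (conn_sum phi s i)) /\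
    (exists m : nat,
        feq_on (H0 Lg H) (conn_sum phi s (size s - 1)) (comp_phi_inv phi beta m) \/
        feq_on (H0 Lg H) (conn_sum phi s (size s - 1))
               (fun h => - comp_phi_inv phi beta m h)).

Definition Lambda_class (K : fieldType) (G : zmodType) (V : lmodType K)
    (br : V -> V -> V) (phi : V -> V) (Lg : G -> V -> Prop) (H : V -> Prop)
    (alpha : V -> K) (beta : V -> K) : Prop :=
  is_root br phi Lg H beta /\ connected br phi Lg H beta alpha.

Definition H_Lambda (K : fieldType) (G : zmodType) (V : lmodType K)
    (br : V -> V -> V) (phi : V -> V) (Lg : G -> V -> Prop) (H : V -> Prop)
    (alpha : V -> K) : V -> Prop :=
  span (fun x => exists (beta : V -> K) (y z : V),
     Lambda_class br phi Lg H alpha beta /\ root_space br phi Lg H beta y /\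
     root_space br phi Lg H (fun h => - beta h) z /\ x = br y z).

Definition V_Lambda (K : fieldType) (G : zmodType) (V : lmodType K)
    (br : V -> V -> V) (phi : V -> V) (Lg : G -> V -> Prop) (H : V -> Prop)
    (alpha : V -> K) : V -> Prop :=
  span (fun v => exists beta : V -> K,
     Lambda_class br phi Lg H alpha beta /\ root_space br phi Lg H beta v).

Definition L_Lambda (K : fieldType) (G : zmodType) (V : lmodType K)
    (br : V -> V -> V) (phi : V -> V) (Lg : G -> V -> Prop) (H : V -> Prop)
    (alpha : V -> K) : V -> Prop :=
  fun x => exists h v, H_Lambda br phi Lg H alpha h /\
                       V_Lambda br phi Lg H alpha v /\ x = h + v.

(* Main.v *)
Require Import Defs.
From HB Require Import structures.
From mathcomp Require Import all_boot all_order all_algebra.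
From mathcomp Require Import zify ring.
From Stdlib Require Import ClassicalEpsilon Classical.
Set Implicit Arguments. Unset Strict Implicit. Unset Printing Implicit Defensive.
Import GRing.Theory.
Local Open Scope ring_scope.

Section Main.
Variables (K : fieldType) (G : zmodType) (V : lmodType K)
    (br : V -> V -> V) (phi : V -> V) (eps : G -> G -> K)
    (Lg : G -> V -> Prop) (H : V -> Prop).
Hypothesis hL : HomLieColor br phi eps Lg.
Hypothesis hreg : regular phi.
Hypothesis hH : max_abelian_subalgebra br phi Lg H.
Hypothesis hsplit : split_wrt br phi Lg H.
Hypothesis hsym : symmetric_roots br phi Lg H.

Lemma bichar : bicharacter eps. Proof. by case: hL. Qed.
Lemma grad : grading Lg. Proof. by case: hL => _ []. Qed.
Lemma brLl a x y z : br (a *: x + y) z = a *: br x z + br y z.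
Proof. by case: hL => _ [_ [hh _]]. Qed.
Lemma brLr a x y z : br x (a *: y + z) = a *: br x y + br x z.
Proof. by case: hL => _ [_ [_ [hh _]]]. Qed.
Lemma phiL a x y : phi (a *: x + y) = a *: phi x + phi y.
Proof. by case: hL => _ [_ [_ [_ [hh _]]]]. Qed.
Lemma brG g1 g2 x y : Lg g1 x -> Lg g2 y -> Lg (g1 + g2) (br x y).
Proof. by case: hL => _ [_ [_ [_ [_ [hh _]]]]]; apply: hh. Qed.
Lemma phiG g x : Lg g x -> Lg g (phi x).
Proof. by case: hL => _ [_ [_ [_ [_ [_ [hh _]]]]]]; apply: hh. Qed.
Lemma phibr x y : phi (br x y) = br (phi x) (phi y).
Proof. by case: hL => _ [_ [_ [_ [_ [_ [_ [hh _]]]]]]]. Qed.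
Lemma skew g1 g2 x y : Lg g1 x -> Lg g2 y -> br x y = - (eps g1 g2 *: br y x).
Proof. by case: hL => _ [_ [_ [_ [_ [_ [_ [_ [hh _]]]]]]]]; apply: hh. Qed.
Lemma jacobi a b c x y z : Lg a x -> Lg b y -> Lg c z ->
      eps c a *: br (phi x) (br y z) + eps a b *: br (phi y) (br z x)
      + eps b c *: br (phi z) (br x y) = 0.
Proof. by case: hL => _ [_ [_ [_ [_ [_ [_ [_ [_ hh]]]]]]]]; apply: hh. Qed.

Lemma dbl0 (x : V) : x = x + x -> x = 0.
Proof. by move=> e; apply: (@addrI _ x); rewrite addr0 -e. Qed.

Lemma br0l z : br 0 z = 0.
Proof.
by have := brLl 1 0 0 z; rewrite !scale1r addr0; move/dbl0.
Qed.
Lemma br0r z : br z 0 = 0.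
Proof.
by have := brLr 1 z 0 0; rewrite !scale1r addr0; move/dbl0.
Qed.
Lemma phi0 : phi 0 = 0.
Proof.
by have := phiL 1 0 0; rewrite !scale1r addr0; move/dbl0.
Qed.
Lemma brZl a x z : br (a *: x) z = a *: br x z.
Proof. by have := brLl a x 0 z; rewrite addr0 br0l addr0. Qed.
Lemma brZr a x z : br z (a *: x) = a *: br z x.
Proof. by have := brLr a z x 0; rewrite addr0 br0r addr0. Qed.
Lemma brDl x y z : br (x + y) z = br x z + br y z.
Proof. by have := brLl 1 x y z; rewrite !scale1r. Qed.
Lemma brDr x y z : br z (x + y) = br z x + br z y.
Proof. by have := brLr 1 z x y; rewrite !scale1r. Qed.
Lemma phiZ a x : phi (a *: x) = a *: phi x.
Proof. by have := phiL a x 0; rewrite addr0 phi0 addr0. Qed.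
Lemma phiD x y : phi (x + y) = phi x + phi y.
Proof. by have := phiL 1 x y; rewrite !scale1r. Qed.
Lemma brNl x z : br (- x) z = - br x z.
Proof. by rewrite -scaleN1r brZl scaleN1r. Qed.
Lemma brNr x z : br z (- x) = - br z x.
Proof. by rewrite -scaleN1r brZr scaleN1r. Qed.
Lemma phiN x : phi (- x) = - phi x.
Proof. by rewrite -scaleN1r phiZ scaleN1r. Qed.
Lemma brBr x y z : br z (x - y) = br z x - br z y.
Proof. by rewrite brDr brNr. Qed.
Lemma phiB x y : phi (x - y) = phi x - phi y.
Proof. by rewrite phiD phiN. Qed.

Lemma br_sumr (I : Type) (s : seq I) (F : I -> V) z :
  br z (\sum_(i <- s) F i) = \sum_(i <- s) br z (F i).
Proof.
elim: s => [|a s IH]; first by rewrite !big_nil br0r.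
by rewrite !big_cons brDr IH.
Qed.
Lemma br_suml (I : Type) (s : seq I) (F : I -> V) z :
  br (\sum_(i <- s) F i) z = \sum_(i <- s) br (F i) z.
Proof.
elim: s => [|a s IH]; first by rewrite !big_nil br0l.
by rewrite !big_cons brDl IH.
Qed.
Lemma phi_sum (I : Type) (s : seq I) (F : I -> V) :
  phi (\sum_(i <- s) F i) = \sum_(i <- s) phi (F i).
Proof.
elim: s => [|a s IH]; first by rewrite !big_nil phi0.
by rewrite !big_cons phiD IH.
Qed.

Lemma phi_inj : injective phi.
Proof. by case: hreg => g h1 h2; apply: can_inj h1. Qed.
Lemma phi_finv y : phi (Defs.finv phi y) = y.
Proof.
rewrite /Defs.finv; case: hreg => g h1 h2.
by apply: (epsilon_spec (inhabits (0:V)) (fun x => phi x = y)); exists (g y).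
Qed.
Lemma finv_phi x : Defs.finv phi (phi x) = x.
Proof. by apply: phi_inj; rewrite phi_finv. Qed.
Lemma phi_eq0 x : phi x = 0 -> x = 0.
Proof. by move=> e; apply: phi_inj; rewrite e phi0. Qed.
Lemma finvL a x y : Defs.finv phi (a *: x + y) = a *: Defs.finv phi x + Defs.finv phi y.
Proof. by apply: phi_inj; rewrite phiL !phi_finv. Qed.
Lemma finvbr x y : Defs.finv phi (br x y) = br (Defs.finv phi x) (Defs.finv phi y).
Proof. by apply: phi_inj; rewrite phibr !phi_finv. Qed.


Lemma sub0 (P : V -> Prop) : is_subspace P -> P 0.
Proof. by case. Qed.
Lemma subL (P : V -> Prop) a x y : is_subspace P -> P x -> P y -> P (a *: x + y).
Proof. by case=> _; apply. Qed.
Lemma subD (P : V -> Prop) x y : is_subspace P -> P x -> P y -> P (x + y).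
Proof. by move=> hP hx hy; have := subL 1 hP hx hy; rewrite scale1r. Qed.
Lemma subZ (P : V -> Prop) a x : is_subspace P -> P x -> P (a *: x).
Proof. by move=> hP hx; have := subL a hP hx (sub0 hP); rewrite addr0. Qed.
Lemma subN (P : V -> Prop) x : is_subspace P -> P x -> P (- x).
Proof. by move=> hP hx; rewrite -scaleN1r; apply: subZ. Qed.
Lemma subB (P : V -> Prop) x y : is_subspace P -> P x -> P y -> P (x - y).
Proof. by move=> hP hx hy; apply: subD => //; apply: subN. Qed.
Lemma sub_sum (P : V -> Prop) (I : eqType) (s : seq I) (F : I -> V) :
  is_subspace P -> (forall i, i \in s -> P (F i)) -> P (\sum_(i <- s) F i).
Proof.
move=> hP; elim: s => [|a s IH] hF; first by rewrite big_nil; apply: sub0.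
rewrite big_cons; apply: subD => //; first by apply: hF; rewrite inE eqxx.
by apply: IH => i hi; apply: hF; rewrite inE hi orbT.
Qed.
Lemma sub_sumIn (P : V -> Prop) (I : Type) (s : seq I) (F : I -> V) :
  is_subspace P -> (forall i, List.In i s -> P (F i)) -> P (\sum_(i <- s) F i).
Proof.
move=> hP; elim: s => [|a s IH] hF; first by rewrite big_nil; apply: sub0.
rewrite big_cons; apply: subD => //; first by apply: hF; left.
by apply: IH => i hi; apply: hF; right.
Qed.

Lemma Hgs : graded_subspace Lg H. Proof. by case: hH => [[[]]]. Qed.
Lemma Hsub : is_subspace H. Proof. by case: Hgs. Qed.
Lemma Hbr x y : H x -> H y -> br x y = 0.
Proof. by case: hH => [[_ hh]] _; apply: hh. Qed.
Lemma Hphi x : H x -> H (phi x).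
Proof. by case: hH => [[[_ [_ [hh _]]]]] _ _; apply: hh. Qed.
Lemma Hsurj y : H y -> exists x, H x /\ phi x = y.
Proof. by case: hH => [[[_ [_ [_ hh]]]]] _ _; apply: hh. Qed.
Lemma Hfinv y : H y -> H (Defs.finv phi y).
Proof. by move=> /Hsurj [x [hx <-]]; rewrite finv_phi. Qed.

Lemma Lgsub g : is_subspace (Lg g). Proof. by case: grad. Qed.
Lemma Lgdec v : exists s : seq (G * V),
      uniq (map fst s) /\ (forall p, p \in s -> Lg p.1 p.2) /\ v = \sum_(p <- s) p.2.
Proof. by case: grad => _ [hh _]. Qed.
Lemma Lguniq (s : seq (G * V)) :
      uniq (map fst s) -> (forall p, p \in s -> Lg p.1 p.2) ->
      \sum_(p <- s) p.2 = 0 -> forall p, p \in s -> p.2 = 0.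
Proof. by case: grad => _ [_ hh]; apply: hh. Qed.

Lemma grad_ext (s : seq (G * V)) y :
  uniq (map fst s) -> (forall p, p \in s -> Lg p.1 p.2) -> Lg 0 y ->
  \sum_(p <- s) p.2 = y -> forall p, p \in s -> p.1 != 0 -> p.2 = 0.
Proof.
move=> hu hs hy hsum.
case: (boolP (0 \in map fst s)) => h0.
- pose t := map (fun p : G * V => (p.1, p.2 - (if p.1 == 0 then y else 0))) s.
  have ht := @Lguniq t.
  move=> p hp hp0.
  have := ht _ _ _ (p.1, p.2 - (if p.1 == 0 then y else 0)).
  rewrite (negbTE hp0) subr0; apply.
  + by rewrite /t -map_comp.
  + move=> q /mapP [r hr ->] /=; apply: subB; first exact: Lgsub.
      exact: hs.
    case: eqP => [->|_]; first exact: hy.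
    exact: (sub0 (Lgsub _)).
  + rewrite /t big_map sumrB hsum.
    rewrite -big_mkcond /= big_const_seq.
    rewrite (_ : count _ _ = 1%N) /= ?addr0 ?subrr //.
    rewrite -(count_map fst (pred1 0)) /=.
    by rewrite count_uniq_mem // h0.
  + by apply/mapP; exists p => //; rewrite (negbTE hp0) subr0.
- pose t := (0, - y) :: s.
  move=> p hp hp0.
  apply: (@Lguniq t).
  + by rewrite /t /= h0.
  + move=> q; rewrite inE => /orP [/eqP ->|]; last exact: hs.
    by apply: subN => //; exact: Lgsub.
  + by rewrite /t big_cons hsum /= addNr.
  + by rewrite inE hp orbT.
Qed.

Lemma H0phi h : H0 Lg H h -> H0 Lg H (phi h).
Proof. by case=> h1 h2; split; [apply: Hphi | apply: phiG]. Qed.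

Lemma H0finv h : H0 Lg H h -> H0 Lg H (Defs.finv phi h).
Proof.
case=> h1 h2; split; first exact: Hfinv.
have [s [hu [hs hx]]] := Lgdec (Defs.finv phi h).
have e : \sum_(p <- map (fun p : G * V => (p.1, phi p.2)) s) p.2 = h.
  by rewrite big_map -phi_sum -hx phi_finv.
have hz := grad_ext _ _ _ e.
rewrite hx; apply: sub_sum; first exact: Lgsub.
move=> p hp; case: (eqVneq p.1 0) => [<-|hne]; first exact: hs.
suff -> : p.2 = 0 by apply: sub0; apply: Lgsub.
apply: phi_eq0.
have := hz _ _ h2 (p.1, phi p.2); apply => //.
- by rewrite -map_comp.
- by move=> q /mapP [r hr ->] /=; apply: phiG; apply: hs.
- by apply/mapP; exists p.
Qed.

Notation fi := (Defs.finv phi).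
Notation H0s := (H0 Lg H).
Notation rs := (root_space br phi Lg H).

Lemma eps_r0 c : eps c 0 = 1.
Proof.
case: bichar => hn [_ [hr _]].
have e := hr c 0 0; rewrite addr0 in e.
have : eps c 0 * (eps c 0 - 1) == 0 by rewrite mulrBr mulr1 -e subrr.
by rewrite mulf_eq0 (negbTE (hn _ _)) /= subr_eq0 => /eqP.
Qed.
Lemma eps_0l b : eps 0 b = 1.
Proof.
case: bichar => hn [_ [_ hl]].
have e := hl 0 0 b; rewrite addr0 in e.
have : eps 0 b * (eps 0 b - 1) == 0 by rewrite mulrBr mulr1 -e subrr.
by rewrite mulf_eq0 (negbTE (hn _ _)) /= subr_eq0 => /eqP.
Qed.
Lemma eps_inv b c : eps b c * eps c b = 1.
Proof. by case: bichar => _ [hh _]. Qed.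

Lemma rs_feq f g v : feq_on H0s f g -> rs f v -> rs g v.
Proof. by move=> e hv h hh; rewrite -e // hv. Qed.
Lemma rs_sub f : is_subspace (rs f).
Proof.
split=> [h _|a x y hx hy h hh]; first by rewrite br0r phi0 scaler0.
by rewrite brLr hx // hy // phiL scalerDr !scalerA mulrC.
Qed.

Lemma rsG f v : rs f v -> exists s : seq (G * V),
  uniq (map fst s) /\ (forall p, p \in s -> Lg p.1 p.2 /\ rs f p.2) /\
  v = \sum_(p <- s) p.2.
Proof.
move=> hv; have [s [hu [hs e]]] := Lgdec v.
exists s; split=> //; split=> // p hp; split; first exact: hs.
move=> h hh; apply/eqP; rewrite -subr_eq0; apply/eqP.
pose t := map (fun p : G * V => (p.1, br h p.2 - f h *: phi p.2)) s.
have := @Lguniq t _ _ _ (p.1, br h p.2 - f h *: phi p.2); apply.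
- by rewrite -map_comp.
- move=> q /mapP [r hr ->] /=; apply: subB; first exact: Lgsub.
    by rewrite -[r.1]add0r; apply: brG; [case: hh | apply: hs].
  by apply: subZ; [exact: Lgsub | apply: phiG; apply: hs].
- rewrite big_map sumrB -br_sumr -e -scaler_sumr -phi_sum -e hv //.
  by rewrite subrr.
- by apply/mapP; exists p.
Qed.

Lemma rs_br_hom b c f g x y : Lg b x -> Lg c y -> rs f x -> rs g y ->
  rs (fun h => f (fi h) + g (fi h)) (br x y).
Proof.
move=> hbx hcy hx hy h'' hh''.
have hh' := H0finv hh''.
set h' := fi h'' in hh'.
have hj := jacobi (proj2 hh') hbx hcy.
rewrite eps_r0 eps_0l !scale1r in hj.
rewrite (skew hcy (proj2 hh')) eps_r0 scale1r (hy h' hh') (hx h' hh') in hj.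
rewrite brNr brZr brZr (skew (phiG hcy) (phiG hbx)) in hj.
rewrite /h' phi_finv -/h' in hj.
rewrite !scalerN !scalerA mulrAC eps_inv mul1r -addrA -opprD -scalerDl in hj.
move/eqP: hj; rewrite subr_eq0 => /eqP ->.
by rewrite phibr addrC.
Qed.

Lemma rs_br f g x y : rs f x -> rs g y ->
  rs (fun h => f (fi h) + g (fi h)) (br x y).
Proof.
move=> /rsG [s [_ [hs ->]]] /rsG [t [_ [ht ->]]].
rewrite br_suml; apply: sub_sum; first exact: rs_sub.
move=> p hp; rewrite br_sumr; apply: sub_sum; first exact: rs_sub.
move=> q hq; have [hp1 hp2] := hs p hp; have [hq1 hq2] := ht q hq.
exact: rs_br_hom hp1 hq1 hp2 hq2.
Qed.

Lemma rs_phi f v : rs f v -> rs (fun h => f (fi h)) (phi v).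
Proof.
move=> hv h hh; rewrite -{1}(phi_finv h) -phibr hv; last exact: H0finv.
by rewrite phiZ.
Qed.

Lemma rs_finv f v : rs f v -> rs (fun h => f (phi h)) (fi v).
Proof.
move=> hv h hh; apply: phi_inj.
by rewrite phibr phi_finv hv ?phiZ ?phi_finv //; apply: H0phi.
Qed.

Lemma H_L0 x : H x -> rs (fun _ => 0) x.
Proof. by move=> hx h [hh _]; rewrite Hbr // scale0r. Qed.

Notation root := (is_root br phi Lg H).
Definition Pr (p : (V -> K) * V) := root p.1 /\ rs p.1 p.2.
Definition d0 : (V -> K) * V := (fun _ => 0, 0).
Definition dist (s : seq ((V -> K) * V)) := forall i j, (i < size s)%N -> (j < size s)%N ->
  i <> j -> ~ feq_on H0s (nth d0 s i).1 (nth d0 s j).1.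

Lemma In_nth (s : seq ((V -> K) * V)) k : (k < size s)%N -> List.In (nth d0 s k) s.
Proof.
elim: s k => [|a s IH] [|k] //= hk; first by left.
by right; apply: IH.
Qed.

Lemma In_set_nth (s : seq ((V -> K) * V)) k y q : (k < size s)%N ->
  List.In q (set_nth d0 s k y) -> q = y \/ List.In q s.
Proof.
elim: s k => [|a s IH] [|k] //= hk.
- by case=> [<-|hq]; [left | right; right].
- case=> [<-|hq]; first by right; left.
  by case: (IH k hk hq) => [->|h]; [left | right; right].
Qed.

Lemma sum_set_nth (s : seq ((V -> K) * V)) k y : (k < size s)%N ->
  \sum_(p <- set_nth d0 s k y) p.2 = \sum_(p <- s) p.2 - (nth d0 s k).2 + y.2.
Proof.
elim: s k => [|a s IH] [|k] //= hk.
- by rewrite !big_cons [a.2 + _]addrC addrK addrC.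
- by rewrite !big_cons IH // !addrA.
Qed.

Lemma feq_sym P (a b : V -> K) : feq_on P a b -> feq_on P b a.
Proof. by move=> e h hh; rewrite e. Qed.

Lemma merge (s : seq ((V -> K) * V)) : (forall p, List.In p s -> Pr p) ->
  exists s', (forall p, List.In p s' -> Pr p) /\ dist s' /\
    \sum_(p <- s) p.2 = \sum_(p <- s') p.2.
Proof.
elim: s => [|p s IH] hs.
  by exists [::]; split=> //; split=> // i j.
have [s' [hs' [hd' he]]] := IH (fun q hq => hs q (or_intror hq)).
have [hp1 hp2] := hs p (or_introl erefl).
case: (classic (exists k, (k < size s')%N /\ feq_on H0s (nth d0 s' k).1 p.1)).
- case=> k [hk hf].
  set q := nth d0 s' k.
  exists (set_nth d0 s' k (q.1, q.2 + p.2)); split; [|split].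
  + move=> r hr; case: (@In_set_nth s' k (q.1, q.2 + p.2) r hk hr) => [->|hr2]; last by apply: hs'.
    have [hq1 hq2] := hs' q (In_nth hk).
    split=> //=; apply: (@subD (rs q.1)); first exact: rs_sub.
      exact: hq2.
    by apply: rs_feq hp2; apply: feq_sym.
  + move=> i j; rewrite size_set_nth (maxn_idPr hk) !nth_set_nth /=.
    move=> hi hj hij.
    have -> : (if i == k then (q.1, q.2 + p.2) else nth d0 s' i).1 = (nth d0 s' i).1.
      by case: eqP => // ->.
    have -> : (if j == k then (q.1, q.2 + p.2) else nth d0 s' j).1 = (nth d0 s' j).1.
      by case: eqP => // ->.
    exact: hd'.
  + by rewrite sum_set_nth // big_cons he /= -/q addrA subrK addrC.
- move=> hn; exists (p :: s'); split; [|split].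
  + by move=> r [<-|hr]; [split | apply: hs'].
  + move=> [|i] [|j] //= hi hj hij.
    * move=> hf; apply: hn; exists j; split=> //; exact: feq_sym.
    * move=> hf; apply: hn; exists i; split=> //.
    * by apply: hd' => // e; apply: hij; rewrite e.
  + by rewrite !big_cons he.
Qed.

Lemma split1 x : exists (h : V) (s : seq ((V -> K) * V)),
      H h /\ (forall p, List.In p s -> Pr p) /\ x = h + \sum_(p <- s) p.2.
Proof. by case: hsplit => hh _; apply: hh. Qed.
Lemma split2 (h : V) (s : seq ((V -> K) * V)) :
      H h -> (forall p, List.In p s -> Pr p) -> dist s ->
      h + \sum_(p <- s) p.2 = 0 -> h = 0 /\ forall p, List.In p s -> p.2 = 0.
Proof. by case: hsplit => _ hh; apply: hh. Qed.

Lemma eq_sumIn (I : Type) (s : seq I) (F1 F2 : I -> V) :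
  (forall i, List.In i s -> F1 i = F2 i) -> \sum_(i <- s) F1 i = \sum_(i <- s) F2 i.
Proof.
elim: s => [|a s IH] hF; first by rewrite !big_nil.
by rewrite !big_cons hF; [rewrite IH // => i hi; apply: hF; right | left].
Qed.

Lemma not_feq P (a b : V -> K) : ~ feq_on P a b -> exists h, P h /\ a h <> b h.
Proof.
move=> hn; apply: NNPP => hne; apply: hn => h hh.
by apply: NNPP => hab; apply: hne; exists h.
Qed.

Lemma L0_H x : rs (fun _ => 0) x -> H x.
Proof.
move=> hx; have [h [s [hh [hs ex]]]] := split1 x.
have [s' [hs' [hd' he]]] := merge hs.
suff hz : \sum_(p <- s') p.2 = 0 by rewrite ex he hz addr0.
have key : forall h', H0s h' -> \sum_(p <- s') p.1 h' *: p.2 = 0.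
  move=> h' hh'; apply: phi_eq0.
  have e0 : br h' (x - h) = 0.
    by rewrite brBr hx // scale0r (Hbr (proj1 hh') hh) subrr.
  rewrite ex addrC addKr he br_sumr in e0.
  rewrite phi_sum; apply: (etrans _ e0); apply: eq_sumIn => p hp.
  by rewrite phiZ; symmetry; apply: (proj2 (hs' p hp)).
have hz : forall p, List.In p s' -> p.2 = 0.
  move=> p hp; have [[_ [hn _]] _] := hs' p hp.
  have [h' [hh' hne]] := not_feq hn.
  set t := map (fun p : (V -> K) * V => (p.1, p.1 h' *: p.2)) s'.
  have [_ hall] : (0:V) = 0 /\ forall q, List.In q t -> q.2 = 0.
    apply: (@split2 0 t); first exact: (sub0 Hsub).
    - move=> q /List.in_map_iff [r [<- hr]]; have [hr1 hr2] := hs' r hr.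
      by split=> //=; apply: (@subZ (rs r.1)) => //; exact: rs_sub.
    - move=> i j hi hj hij; rewrite size_map in hi hj.
      rewrite !(nth_map d0) //=; exact: hd'.
    - by rewrite add0r big_map; apply: key.
  have := hall (p.1, p.1 h' *: p.2) _.
  move=> /(_ (List.in_map _ _ _ hp)) /= /eqP; rewrite scaler_eq0 => /orP [|/eqP //].
  by move=> /eqP e; move: hne; rewrite e.
rewrite (eq_sumIn hz); exact: big1.
Qed.

Lemma feq_trans P (a b c : V -> K) : feq_on P a b -> feq_on P b c -> feq_on P a c.
Proof. by move=> e1 e2 h hh; rewrite e1 ?e2. Qed.
Lemma feq_pw P (a b : V -> K) : (forall h, a h = b h) -> feq_on P a b.
Proof. by move=> e h _. Qed.

Lemma H0sub : is_subspace H0s.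
Proof.
split; first by split; [exact: (sub0 Hsub) | exact: (sub0 (Lgsub 0))].
move=> a x y [hx1 hx2] [hy1 hy2]; split; first exact: (subL _ Hsub).
exact: (subL _ (Lgsub 0)).
Qed.

Lemma root_feq a b : root a -> feq_on H0s a b -> root b.
Proof.
move=> [hl [hn [v [hv0 hv]]]] e; split; [|split].
- move=> c x y hx hy; rewrite -!e //; first exact: hl.
  exact: (subL _ H0sub).
- move=> hb; apply: hn => h hh; rewrite e //; exact: hb.
- by exists v; split=> //; apply: rs_feq hv.
Qed.

Lemma root_sh f : root f -> root (fun h => f (fi h)).
Proof.
move=> [hl [hn [v [hv0 hv]]]]; split; [|split].
- move=> c x y hx hy /=; rewrite finvL hl //; exact: H0finv.
- move=> hf; apply: hn => h hh; rewrite -(finv_phi h); apply: hf.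
  exact: H0phi.
- exists (phi v); split; last exact: rs_phi.
  by apply/negP => /eqP /phi_eq0 /eqP; apply/negP.
Qed.

Lemma root_shphi f : root f -> root (fun h => f (phi h)).
Proof.
move=> [hl [hn [v [hv0 hv]]]]; split; [|split].
- move=> c x y hx hy /=; rewrite phiL hl //; exact: H0phi.
- move=> hf; apply: hn => h hh; rewrite -(phi_finv h); apply: hf.
  exact: H0finv.
- exists (fi v); split; last exact: rs_finv.
  apply/negP => /eqP e; move/negP: hv0; apply.
  by rewrite -(phi_finv v) e phi0.
Qed.

Lemma root_neg f : root f -> root (fun h => - f h).
Proof. exact: hsym. Qed.

Notation cpi := (Defs.comp_phi_inv phi).

Lemma cpiS f n h : cpi f n.+1 h = cpi f n (fi h).
Proof. by rewrite /Defs.comp_phi_inv iterSr. Qed.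
Lemma cpiS' f n h : cpi f n.+1 h = f (fi (iter n fi h)).
Proof. by rewrite /Defs.comp_phi_inv iterS. Qed.

Lemma root_cpi f n : root f -> root (cpi f n).
Proof.
move=> hf; elim: n => [|n IH].
  by apply: (root_feq hf); apply: feq_pw.
have h2 := root_sh IH. by apply: (root_feq h2); apply: feq_pw => h; rewrite cpiS.
Qed.

Lemma cpi_feq P f g n : (forall h, P h -> P (fi h)) -> feq_on P f g -> feq_on P (cpi f n) (cpi g n).
Proof.
move=> hP e h hh; rewrite /Defs.comp_phi_inv; apply: e.
by elim: n => //= n IH; apply: hP.
Qed.

Definition f0 : V -> K := fun _ => 0.

Fixpoint Wk (a : V -> K) (t : seq (V -> K)) (i : nat) : V -> K :=
  match i with
  | 0 => a
  | i'.+1 => fun h => Wk a t i' (fi h) + nth f0 t i' (fi h)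
  end.

Lemma conn_W a t i h : Defs.conn_sum phi (a :: t) i h = Wk a t i h.
Proof.
elim: i h => [|i IH] h.
  by rewrite /Defs.conn_sum big_geq // addr0.
rewrite /= -IH /Defs.conn_sum big_nat_recr //= subSnn.
rewrite cpiS addrA; congr (_ + _ + _).
apply: eq_big_nat => j /andP [hj1 hj2].
by rewrite subSn ?cpiS // ltnW.
Qed.

Lemma fi_H0 h : H0s h -> H0s (fi h).
Proof. exact: H0finv. Qed.

Lemma Wk_feq a a' t i : feq_on H0s a a' -> feq_on H0s (Wk a t i) (Wk a' t i).
Proof.
move=> e; elim: i => [|i IH] //= h hh.
by rewrite IH //; apply: fi_H0.
Qed.

Lemma iter_fi k h : iter k fi (fi h) = fi (iter k fi h).
Proof. by rewrite -iterSr iterS. Qed.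

Lemma Wk_cpi a t i k h :
  Wk (cpi a k) (map (fun f => cpi f k) t) i h = cpi (Wk a t i) k h.
Proof.
elim: i h => [|i IH] h //=.
rewrite IH /Defs.comp_phi_inv /= iter_fi; congr (_ + _).
case: (ltnP i (size t)) => hi.
  by rewrite (nth_map f0) // /Defs.comp_phi_inv iter_fi.
by rewrite !nth_default ?size_map.
Qed.

Lemma Wk_neg a t i h :
  Wk (fun h => - a h) (map (fun f h => - f h) t) i h = - Wk a t i h.
Proof.
elim: i h => [|i IH] h //=.
rewrite IH opprD; congr (_ + _).
case: (ltnP i (size t)) => hi.
  by rewrite (nth_map f0).
by rewrite !nth_default ?size_map // oppr0.
Qed.

Lemma Wk_cat1 a t u i h : (i <= size t)%N -> Wk a (t ++ u) i h = Wk a t i h.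
Proof.
elim: i h => [|i IH] h //= hi.
by rewrite IH ?(ltnW hi) // nth_cat hi.
Qed.

Lemma Wk_cat2 a t u j h : Wk a (t ++ u) (size t + j) h = Wk (Wk a t (size t)) u j h.
Proof.
elim: j h => [|j IH] h; first by rewrite addn0 Wk_cat1.
rewrite addnS /= IH nth_cat ltnNge leq_addr /=.
by rewrite addKn.
Qed.

Definition chain b a := exists a0 t n m, root a0 /\ (forall x, List.In x t -> root x) /\
  feq_on H0s a0 (cpi b n) /\
  (forall i, (0 < i)%N -> (i < size t)%N -> root (Wk a0 t i)) /\
  (feq_on H0s (Wk a0 t (size t)) (cpi a m) \/
   feq_on H0s (Wk a0 t (size t)) (fun h => - cpi a m h)).

Lemma conn_chain b a : connected br phi Lg H b a -> chain b a.
Proof.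
case=> _ [_ [[|a0 t] [//= _ [hr [[n hn] [hmid [m hm]]]]]]].
exists a0, t, n, m; split; [|split; [|split; [|split]]].
- by apply: hr; left.
- by move=> x hx; apply: hr; right.
- exact: hn.
- move=> i hi1 hi2; apply: (root_feq (hmid i hi1 _)); last by apply: feq_pw => h; rewrite conn_W.
  by rewrite /=; lia.
- rewrite /= subn1 /= in hm.
  case: hm => hm; [left | right]; apply: feq_trans hm; apply: feq_pw => h; by rewrite conn_W.
Qed.

Lemma chain_conn b a : root b -> root a -> chain b a -> connected br phi Lg H b a.
Proof.
move=> hb ha [a0 [t [n [m [h0 [ht [hn [hmid hm]]]]]]]].
split=> //; split=> //; exists (a0 :: t); split=> //; split; [|split; [|split]].
- by move=> x [<-|hx]; [|apply: ht].
- by exists n.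
- move=> i hi1 hi2; apply: (root_feq (hmid i hi1 _)); last by apply: feq_pw => h; rewrite conn_W.
  by move: hi2; rewrite /=; lia.
- exists m; rewrite /= subn1 /=.
  case: hm => hm; [left | right]; apply: feq_trans hm; apply: feq_pw => h; by rewrite conn_W.
Qed.

Lemma cpiD f a b h : cpi (cpi f a) b h = cpi f (a + b) h.
Proof. by rewrite /Defs.comp_phi_inv iterD. Qed.

Lemma cpi_feqH f g n : feq_on H0s f g -> feq_on H0s (cpi f n) (cpi g n).
Proof. by apply: cpi_feq => h; apply: fi_H0. Qed.

Lemma chain_gen b a a0 t n m : root a0 -> (forall x, List.In x t -> root x) ->
  feq_on H0s a0 (cpi b n) ->
  (forall i, (0 < i)%N -> (i < size t)%N -> root (Wk a0 t i)) ->
  (feq_on H0s (Wk a0 t (size t)) (cpi a m) \/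
   feq_on H0s (Wk a0 t (size t)) (fun h => - cpi a m h)) -> chain b a.
Proof. by move=> *; exists a0, t, n, m. Qed.

Lemma chain_shift b a k : chain b a -> chain (cpi b k) a.
Proof.
move=> [a0 [t [n [m [h0 [ht [hn [hmid hm]]]]]]]].
apply: (@chain_gen _ _ (cpi a0 k) (map (fun f => cpi f k) t) n (m + k)).
- exact: root_cpi.
- by move=> x /List.in_map_iff [y [<- hy]]; apply: root_cpi; apply: ht.
- apply: (feq_trans (cpi_feqH k hn)); apply: feq_pw => h.
  by rewrite !cpiD addnC.
- move=> i hi1; rewrite size_map => hi2.
  apply: (root_feq (root_cpi k (hmid i hi1 hi2))); apply: feq_pw => h.
  by rewrite Wk_cpi.
- rewrite size_map.
- have ew : feq_on H0s (Wk (cpi a0 k) [seq cpi f k | f <- t] (size t))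
                      (cpi (Wk a0 t (size t)) k).
    by apply: feq_pw => h; rewrite Wk_cpi.
  case: hm => hm; [left | right]; apply: (feq_trans ew);
    apply: (feq_trans (cpi_feqH k hm)); apply: feq_pw => h.
  + by rewrite cpiD.
  + by rewrite /Defs.comp_phi_inv iterD.
Qed.

Lemma chain_phi b a : chain b a -> chain (fun h => b (phi h)) a.
Proof.
move=> [a0 [t [n [m [h0 [ht [hn [hmid hm]]]]]]]].
apply: (@chain_gen _ _ a0 t n.+1 m) => //.
apply: (feq_trans hn); apply: feq_pw => h.
by rewrite cpiS' phi_finv.
Qed.

Lemma chain_sum b c a : chain b a -> root c ->
  root (fun h => b (fi h) + c (fi h)) -> chain (fun h => b (fi h) + c (fi h)) a.
Proof.
move=> [a0 [t [n [m [h0 [ht [hn [hmid hm]]]]]]]] hc hd.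
set d := fun h => b (fi h) + c (fi h).
set x := fun h => - cpi c n.+1 h.
set u := map (fun f => cpi f 2) t.
have ex1 : forall h, Wk (cpi d n) [:: x] 1 h = cpi b n.+2 h.
  move=> h; rewrite /= /x /d /Defs.comp_phi_inv /=.
  by rewrite -!iterSr -iterS addrK.
have eE : forall j, feq_on H0s (Wk (cpi d n) (x :: u) j.+1) (cpi (Wk a0 t j) 2).
  move=> j; apply: (@feq_trans _ _ (Wk (Wk (cpi d n) [:: x] 1) u j)).
    by apply: feq_pw => h; rewrite -(Wk_cat2 _ [:: x] u j h).
  apply: (@feq_trans _ _ (Wk (cpi a0 2) u j)); last first.
    by apply: feq_pw => h; rewrite Wk_cpi.
  apply: Wk_feq; apply: (feq_trans (feq_pw ex1)).
  apply: feq_sym; apply: (feq_trans (cpi_feqH 2 hn)).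
  by apply: feq_pw => h; rewrite cpiD addn2.
apply: (@chain_gen _ _ (cpi d n) (x :: u) n (m + 2)).
- exact: root_cpi.
- move=> y [<-|]; first by apply: root_neg; apply: root_cpi.
  by move=> /List.in_map_iff [z [<- hz]]; apply: root_cpi; apply: ht.
- by apply: feq_pw.
- move=> [//|j] _; rewrite /= size_map ltnS => hj.
  apply: root_feq (feq_sym (eE j)).
  case: j hj => [|j] hj; first exact: root_cpi.
  by apply: root_cpi; apply: hmid.
- rewrite /= size_map.
  case: hm => hm; [left | right]; apply: (feq_trans (eE _));
    apply: (feq_trans (cpi_feqH 2 hm)); apply: feq_pw => h.
  + by rewrite cpiD.
  + by rewrite /Defs.comp_phi_inv iterD.
Qed.

Variable alpha : V -> K.
Hypothesis halpha : root alpha.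

Notation LC := (Lambda_class br phi Lg H alpha).

Lemma LC_sh b : LC b -> LC (fun h => b (fi h)).
Proof.
move=> [hb hc]; split; first exact: root_sh.
apply: chain_conn => //; first exact: root_sh.
exact: (chain_shift 1 (conn_chain hc)).
Qed.

Lemma LC_phi b : LC b -> LC (fun h => b (phi h)).
Proof.
move=> [hb hc]; split; first exact: root_shphi.
apply: chain_conn => //; first exact: root_shphi.
exact: (chain_phi (conn_chain hc)).
Qed.

Lemma LC_sum b c : LC b -> root c -> root (fun h => b (fi h) + c (fi h)) ->
  LC (fun h => b (fi h) + c (fi h)).
Proof.
move=> [hb hcn] hc hd; split=> //.
by apply: chain_conn => //; apply: chain_sum => //; apply: conn_chain.
Qed.

Lemma span_sub (P : V -> Prop) : is_subspace (Defs.span P).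
Proof.
split; first exact: Defs.span0.
move=> a x y hx; elim: hx y => [|b p x' hp hx' IH] y hy.
  by rewrite scaler0 add0r.
by rewrite scalerDr scalerA -addrA; apply: Defs.spanS => //; apply: IH.
Qed.
Lemma span_gen (P : V -> Prop) x : P x -> Defs.span P x.
Proof. by move=> hx; have := Defs.spanS 1 hx (Defs.span0 P); rewrite scale1r addr0. Qed.
Lemma span_ind (P Q : V -> Prop) x : is_subspace Q -> (forall p, P p -> Q p) ->
  Defs.span P x -> Q x.
Proof.
move=> hQ hPQ; elim=> [|a p y hp _ IH]; first exact: sub0.
by apply: subL => //; apply: hPQ.
Qed.

Lemma lin_pre_sub (F : V -> V) (Q : V -> Prop) :
  (forall a x y, F (a *: x + y) = a *: F x + F y) -> is_subspace Q ->
  is_subspace (fun x => Q (F x)).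
Proof.
move=> hF hQ.
have F0 : F 0 = 0 by apply: dbl0; have := hF 1 0 0; rewrite !scale1r addr0.
by split=> [|a x y hx hy]; [rewrite F0; exact: sub0 | rewrite hF; apply: subL].
Qed.

Notation HL := (H_Lambda br phi Lg H alpha).
Notation VL := (V_Lambda br phi Lg H alpha).
Notation LL := (L_Lambda br phi Lg H alpha).

Lemma LL_sub : is_subspace LL.
Proof.
split; first by exists 0, 0; split; [exact: Defs.span0 | split; [exact: Defs.span0 | rewrite addr0]].
move=> a x y [h1 [v1 [hh1 [hv1 ->]]]] [h2 [v2 [hh2 [hv2 ->]]]].
exists (a *: h1 + h2), (a *: v1 + v2); split; [|split].
- exact: (subL _ (span_sub _)).
- exact: (subL _ (span_sub _)).
- by rewrite scalerDr -!addrA; congr (_ + _); rewrite addrCA.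
Qed.
Lemma HL_LL x : HL x -> LL x.
Proof. by move=> hx; exists x, 0; split=> //; split; [exact: Defs.span0 | rewrite addr0]. Qed.
Lemma VL_LL x : VL x -> LL x.
Proof. by move=> hx; exists 0, x; split; [exact: Defs.span0 | split=> //; rewrite add0r]. Qed.

Lemma HL_H x : HL x -> H x.
Proof.
apply: span_ind; first exact: Hsub.
move=> p [b [y [z [hb [hy [hz ->]]]]]].
apply: L0_H; apply: rs_feq (rs_br hy hz).
by apply: feq_pw => h; rewrite subrr.
Qed.

Lemma gen_sh b p : LC b -> rs b p -> forall (f : V -> K), feq_on H0s f (fun h => b (fi h)) ->
  rs f p -> VL p.
Proof.
move=> hb _ f e hp; apply: span_gen; exists (fun h => b (fi h)); split; first exact: LC_sh.
by apply: rs_feq hp.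
Qed.

Lemma br_H_V h v : H h -> VL v -> VL (br h v).
Proof.
move=> hh; apply: (@span_ind _ (fun v => VL (br h v))).
  by apply: lin_pre_sub; [move=> *; exact: brLr | exact: span_sub].
move=> p [b [hb hp]].
apply: span_gen; exists (fun h => b (fi h)); split; first exact: LC_sh.
apply: rs_feq (rs_br (H_L0 hh) hp); apply: feq_pw => x; exact: add0r.
Qed.

Lemma br_V_H v h : VL v -> H h -> VL (br v h).
Proof.
move=> hv hh; move: hv; apply: (@span_ind _ (fun v => VL (br v h))).
  by apply: lin_pre_sub; [move=> *; exact: brLl | exact: span_sub].
move=> p [b [hb hp]].
apply: span_gen; exists (fun h => b (fi h)); split; first exact: LC_sh.
apply: rs_feq (rs_br hp (H_L0 hh)); apply: feq_pw => x; exact: addr0.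
Qed.

Lemma br_gen b c w1 w2 : LC b -> LC c -> rs b w1 -> rs c w2 -> LL (br w1 w2).
Proof.
move=> hb hc h1 h2.
set d := fun h => b (fi h) + c (fi h).
have hd := rs_br h1 h2.
case: (classic (feq_on H0s d f0)) => hd0.
  apply: HL_LL; apply: span_gen; exists b, w1, w2; split=> //; split=> //; split=> //.
  apply: rs_feq h2 => h hh.
  have := hd0 (phi h) (H0phi hh); rewrite /d /f0 !finv_phi => /eqP.
  by rewrite addrC addr_eq0 => /eqP.
case: (classic (root d)) => hdr.
  by apply: VL_LL; apply: span_gen; exists d; split=> //; apply: LC_sum => //; case: hc.
case: (classic (br w1 w2 = 0)) => [->|hne]; first exact: (sub0 LL_sub).
exfalso; apply: hdr; split; [|split].
- have [lb _] := root_sh (proj1 hb); have [lc _] := root_sh (proj1 hc).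
  move=> a x y hx hy; rewrite /d lb // lc //; ring.
- exact: hd0.
- by exists (br w1 w2); split=> //; apply/eqP.
Qed.

Lemma br_V_V v w : VL v -> VL w -> LL (br v w).
Proof.
move=> hv hw; move: hv; apply: (@span_ind _ (fun v => LL (br v w))).
  by apply: lin_pre_sub; [move=> *; exact: brLl | exact: LL_sub].
move=> p [b [hb hp]]; move: hw.
apply: (@span_ind _ (fun v => LL (br p v))).
  by apply: lin_pre_sub; [move=> *; exact: brLr | exact: LL_sub].
move=> q [c [hc hq]]; exact: br_gen hb hc hp hq.
Qed.

Lemma phi_HL x : HL x -> HL (phi x).
Proof.
apply: (@span_ind _ (fun v => HL (phi v))).
  by apply: lin_pre_sub; [exact: phiL | exact: span_sub].
move=> p [b [y [z [hb [hy [hz ->]]]]]].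
apply: span_gen; exists (fun h => b (fi h)), (phi y), (phi z).
split; first exact: LC_sh.
by split; [exact: rs_phi | split; [exact: (rs_phi hz) | exact: phibr]].
Qed.

Lemma phi_VL x : VL x -> VL (phi x).
Proof.
apply: (@span_ind _ (fun v => VL (phi v))).
  by apply: lin_pre_sub; [exact: phiL | exact: span_sub].
move=> p [b [hb hp]].
apply: span_gen; exists (fun h => b (fi h)); split; [exact: LC_sh | exact: rs_phi].
Qed.

Lemma fi_HL x : HL x -> HL (fi x).
Proof.
apply: (@span_ind _ (fun v => HL (fi v))).
  by apply: lin_pre_sub; [exact: finvL | exact: span_sub].
move=> p [b [y [z [hb [hy [hz ->]]]]]].
apply: span_gen; exists (fun h => b (phi h)), (fi y), (fi z).
split; first exact: LC_phi.
by split; [exact: rs_finv | split; [exact: (rs_finv hz) | exact: finvbr]].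
Qed.

Lemma fi_VL x : VL x -> VL (fi x).
Proof.
apply: (@span_ind _ (fun v => VL (fi v))).
  by apply: lin_pre_sub; [exact: finvL | exact: span_sub].
move=> p [b [hb hp]].
apply: span_gen; exists (fun h => b (phi h)); split; [exact: LC_phi | exact: rs_finv].
Qed.

Lemma main_sec :
  (forall x y, LL x -> LL y -> LL (br x y)) /\
  (forall x, LL x -> LL (phi x)) /\
  (forall y, LL y -> exists x, LL x /\ phi x = y).
Proof.
split; [|split].
- move=> x y [h1 [v1 [hh1 [hv1 ->]]]] [h2 [v2 [hh2 [hv2 ->]]]].
  rewrite brDl !brDr.
  apply: subD; first exact: LL_sub.
    apply: subD; first exact: LL_sub.
      by rewrite (Hbr (HL_H hh1) (HL_H hh2)); exact: (sub0 LL_sub).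
    by apply: VL_LL; apply: br_H_V => //; exact: HL_H.
  apply: subD; first exact: LL_sub.
    by apply: VL_LL; apply: br_V_H => //; exact: HL_H.
  exact: br_V_V.
- move=> x [h [v [hh [hv ->]]]]; exists (phi h), (phi v); split; first exact: phi_HL.
  by split; [exact: phi_VL | exact: phiD].
- move=> y [h [v [hh [hv ->]]]]; exists (fi h + fi v); split.
    by exists (fi h), (fi v); split; [exact: fi_HL | split; [exact: fi_VL |]].
  by rewrite phiD !phi_finv.
Qed.
End Main.

Unset Implicit Arguments.

Theorem mainTheorem7 (K : fieldType) (G : zmodType) (V : lmodType K)
    (br : V -> V -> V) (phi : V -> V) (eps : G -> G -> K)
    (Lg : G -> V -> Prop) (H : V -> Prop)
    (hL : HomLieColor br phi eps Lg)
    (hreg : regular phi)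
    (hH : max_abelian_subalgebra br phi Lg H)
    (hsplit : split_wrt br phi Lg H)
    (hsym : symmetric_roots br phi Lg H)
    (alpha : V -> K) (halpha : is_root br phi Lg H alpha) :
  (forall x y, L_Lambda br phi Lg H alpha x -> L_Lambda br phi Lg H alpha y ->
     L_Lambda br phi Lg H alpha (br x y)) /\
  (forall x, L_Lambda br phi Lg H alpha x -> L_Lambda br phi Lg H alpha (phi x)) /\
  (forall y, L_Lambda br phi Lg H alpha y ->
     exists x, L_Lambda br phi Lg H alpha x /\ phi x = y).
Proof. exact: (main_sec hL hreg hH hsplit hsym halpha). Qed.
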